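(* Let $G=(V,E)$ be a directed graph with a partition $R_1,\dots,R_k$ of $V$, let $A$ be a scheduling algorithm, $f\in\mathbb{N}$, $\ell=2f+1$, and let $(G',P,A')$ be the partitioned Byzantine reinforcement described in the context. Let $F'\subseteq V'$ be the set of faulty nodes, which may behave arbitrarily. Suppose that for each $k'\in[k]$ there are at least $f+1$ indices $i\in[\ell]$ with $\{v_i : v\in R_{k'}\}\cap F'=\emptyset$. Then $A'$ simulates $A$: for each $v\in V$, a strict majority of the copies $v_i$, $i\in[\ell]$, compute in every round the state of $v$ in the fault-free execution of $A$.
   Context: Model: a synchronous network is a directed graph $G=(V,E)$. A scheduling algorithm $A$ assigns a state to each node; in each round each node may receive environment input, decides from its state which message (if any) to send on each outgoing link, and updates its state from messages received on incoming links. Write $[\ell]=\{1,\dots,\ell\}$. Partitioned Byzantine reinforcement: given a partition $R_1,\dots,R_k$ of $V$, set $V'=V\times[\ell]$, $v_i=(v,i)$, $P(v_i)=v$. For $e=(v,w)\in E$, $E'_e=\{(v_i,w_i): i\in[\ell]\}$ if $v,w$ lie in the same region, and $E'_e=\{(v_i,w_j): i,j\in[\ell]\}$ otherwise; $E'=\bigcup_e E'_e$. Each copy receives the environment input of its original. For $v'\in V'$ and $(w,P(v'))\in E$ let $N_{v'}(w)=\{w'\in V' : P(w')=w,\ (w',v')\in E'\}$. Algorithm $A'$: each $v'$ initializes local copies of the state of $P(v')$ as in $A$; in each round sends on each $(v',w')\in E'$ the message $P(v')$ would send on $(P(v'),P(w'))$ under $A$ according to its local state (an arbitrary message if it cannot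 compute it correctly); and updates its state as if $P(v')$ had received, from each in-neighbor $w$, the message sent by the majority of the nodes in $N_{v'}(w)$. *)

(* Defs.v *)
From mathcomp Require Import all_boot.
Set Implicit Arguments. Unset Strict Implicit. Unset Printing Implicit Defensive.

(* A synchronous scheduling algorithm on a directed graph (V, E):
   - [init v]              : initial state of node v
   - [send v s x w]        : message (None = no message) that v sends on link (v,w)
                             when in state s having received environment input x
   - [upd v s x rcv]       : new state of v from state s, input x and the
                             received messages [rcv w] from each in-neighbour w
                             ([rcv w = None] if no message / not an in-neighbour).
   - [inp r v]             : environment input of v in round r. *)

Fixpoint run (V : finType) (S I : Type) (M : Type) (E : rel V)
  (init : V -> S) (send : V -> S -> I -> V -> option M)
  (upd : V -> S -> I -> (V -> option M) -> S) (inp : nat -> V -> I)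
  (r : nat) : V -> S :=
  match r with
  | 0 => init
  | r'.+1 => fun v =>
      let st := run E init send upd inp r' in
      upd v (st v) (inp r' v)
          (fun w => if E w v then send w (st w) (inp r' w) v else None)
  end.

(* edges of the partitioned Byzantine reinforcement G' on V x [ell];
   [reg v] is the index of the region of v (partition R_1..R_k of V). *)
Definition reinf_edge (V : finType) (E : rel V) (k : nat) (reg : V -> 'I_k)
  (ell : nat) : rel (V * 'I_ell) :=
  fun x y => E x.1 y.1 && ((reg x.1 != reg y.1) || (x.2 == y.2)).

Definition Nset (V : finType) (E : rel V) (k : nat) (reg : V -> 'I_k)
  (ell : nat) (v' : V * 'I_ell) (w : V) : {set V * 'I_ell} :=
  [set w' | (w'.1 == w) && reinf_edge E reg w' v'].

Definition majority_fun (T : finType) (X : eqType)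
  (maj : {set T} -> (T -> X) -> X) : Prop :=
  forall (A : {set T}) (msg : T -> X) (m : X),
    #|A| < 2 * #|[set x in A | msg x == m]| -> maj A msg = m.

(* Execution of A' on G' with faulty set F; faulty nodes send the arbitrary
   messages [adv r x y] on each link (x,y) in round r. *)
Fixpoint run_reinf (V : finType) (S I : Type) (M : eqType) (E : rel V)
  (k : nat) (reg : V -> 'I_k) (ell : nat)
  (init : V -> S) (send : V -> S -> I -> V -> option M)
  (upd : V -> S -> I -> (V -> option M) -> S) (inp : nat -> V -> I)
  (F : {set V * 'I_ell}) (adv : nat -> V * 'I_ell -> V * 'I_ell -> option M)
  (maj : {set V * 'I_ell} -> (V * 'I_ell -> option M) -> option M)
  (r : nat) : V * 'I_ell -> S :=
  match r with
  | 0 => fun x => init x.1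
  | r'.+1 => fun x =>
      let st := run_reinf E reg init send upd inp F adv maj r' in
      let msg y := if y \in F then adv r' y x
                   else send y.1 (st y) (inp r' y.1) x.1 in
      upd x.1 (st x) (inp r' x.1)
          (fun w => if E w x.1 then maj (Nset E reg x w) msg else None)
  end.

(* Main.v *)
Require Import Defs.
From mathcomp Require Import all_boot.
From Stdlib Require Import FunctionalExtensionality.
From mathcomp Require Import zify.

Theorem lemma5 (V : finType) (S I : Type) (M : eqType) (E : rel V)
  (k : nat) (reg : V -> 'I_k)
  (init : V -> S) (send : V -> S -> I -> V -> option M)
  (upd : V -> S -> I -> (V -> option M) -> S) (inp : nat -> V -> I)
  (f : nat) (F : {set V * 'I_(2 * f + 1)})
  (adv : nat -> V * 'I_(2 * f + 1) -> V * 'I_(2 * f + 1) -> option M)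
  (maj : {set V * 'I_(2 * f + 1)} -> (V * 'I_(2 * f + 1) -> option M) -> option M)
  (Hmaj : majority_fun maj)
  (HF : forall c : 'I_k,
      f < #|[set i : 'I_(2 * f + 1) |
              [forall v : V, (reg v == c) ==> ((v, i) \notin F)]]|) :
  forall v : V, exists X : {set 'I_(2 * f + 1)},
    2 * f + 1 < 2 * #|X| /\
    forall (i : 'I_(2 * f + 1)) (r : nat), i \in X ->
      (v, i) \notin F /\
      run_reinf E reg init send upd inp F adv maj r (v, i) = run E init send upd inp r v.
Proof.
set n := 2 * f + 1.
pose good (x : V * 'I_n) := [forall u : V, (reg u == reg x.1) ==> ((u, x.2) \notin F)].
have goodF : forall x, good x -> x \notin F.
  case=> v i /forallP /(_ v); rewrite eqxx; exact.
have main : forall r x, good x ->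
    run_reinf E reg init send upd inp F adv maj r x = run E init send upd inp r x.1.
  elim=> [|r IH] x gx //=.
  rewrite IH //; congr upd.
  apply: functional_extensionality => w.
  case Ew: (E w x.1) => //.
  apply: Hmaj.
  set A := Nset _ _ _ _.
  set B := [set y in A | _].
  have gy : forall y : V * 'I_n, y \in A -> good y -> y \in B.
    move=> y yA gy; rewrite inE yA /= (negbTE (goodF _ gy)).
    have := yA; rewrite inE => /andP[/eqP y1 _].
    by rewrite IH // y1.
  case: (eqVneq (reg w) (reg x.1)) => Hr.
  - have AB : A \subset [set (w, x.2)].
      apply/subsetP => y; rewrite !inE /reinf_edge => /andP[/eqP y1 /andP[_]].
      rewrite y1 Hr eqxx /= => /eqP y2.
      by case: y y1 y2 => a b /= -> ->.
    have wB : (w, x.2) \in B.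
      apply: gy.
        by rewrite inE /= eqxx /reinf_edge /= Ew eqxx orbT.
      apply/forallP => u; apply/implyP => /eqP /= Hu.
      move/forallP: gx => /(_ u); rewrite Hu Hr eqxx; exact.
    have := subset_leq_card AB; rewrite cards1 => H1.
    have : 0 < #|B| by apply/card_gt0P; exists (w, x.2).
    move=> H2; lia.
  - set G := [set i : 'I_n | [forall v : V, (reg v == reg w) ==> ((v, i) \notin F)]].
    have inj : injective (@pair V 'I_n w) by move=> a b [].
    have AB : A \subset (pair w) @: [set: 'I_n].
      apply/subsetP => y; rewrite inE => /andP[/eqP y1 _].
      case: y y1 => a b /= ->; exact: imset_f.
    have GB : (pair w) @: G \subset B.
      apply/subsetP => y /imsetP [j jG ->]; apply: gy.
        rewrite inE /= eqxx /reinf_edge /= Ew /=.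
        by rewrite Hr.
      by rewrite inE in jG.
    have H1 := subset_leq_card AB; rewrite card_imset // cardsT card_ord in H1.
    have H2 := subset_leq_card GB; rewrite card_imset // in H2.
    have H3 : f < #|G| := HF (reg w).
    have H4 : f < #|B| := leq_trans H3 H2. rewrite /n in H1; lia.
move=> v.
exists [set i : 'I_n | [forall u : V, (reg u == reg v) ==> ((u, i) \notin F)]].
split.
  apply: (@leq_trans (2 * f.+1)); first by rewrite /n; lia.
  by rewrite leq_mul2l; apply/orP; right; exact: HF.
move=> i r; rewrite inE => gi.
have g : good (v, i) by [].
by split; [apply: goodF | apply: main].
Qed.
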